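(* Let $a(x),b(x),m(x)\in R_n=\mathbb{F}_2[x]/\langle x^n-1\rangle$ with $b(x)=m(x)a(x)$ in $R_n$. If the generalized bicycle code defined by $a(x)$ and $b(x)$ has dimension larger than zero, then its minimum distance is at most $\mathrm{wt}(m(x))+1$.
   Context: Elements of $R_n$ are identified with binary vectors of length $n$ via their representative of degree $<n$; $\mathrm{wt}$ is the number of nonzero coefficients. The generalized bicycle (GB) code defined by $a(x),b(x)$ is the CSS code on $2n$ qubits, vectors of $\mathbb{F}_2^{2n}$ written as pairs $(u(x),v(x))$, with $C_2=\{(c(x)a(x),c(x)b(x)):c\in R_n\}$ (X-stabilizers), $C_1=\{(u,v):u(x)b(x)+v(x)a(x)=0\text{ in }R_n\}$, $C_2'=\{(c(x)b(x^{-1}),c(x)a(x^{-1})):c\in R_n\}$ (Z-stabilizers), $C_1'=\{(u,v):u(x)a(x^{-1})+v(x)b(x^{-1})=0\}$, where $x^{-1}=x^{n-1}$. Its dimension is $\dim C_1-\dim C_2$ and its minimum distance is $\min\{\min_{w\in C_1\setminus C_2}\mathrm{wt}(w),\ \min_{w\in C_1'\setminus C_2'}\mathrm{wt}(w)\}$. *)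

(* Defs.v *)
From HB Require Import structures.
From mathcomp Require Import all_boot all_order all_algebra.
Set Implicit Arguments. Unset Strict Implicit. Unset Printing Implicit Defensive.
Import GRing.Theory.
Local Open Scope ring_scope.

(* R_n = F_2[x]/<x^n - 1>; an element is identified with its binary vector
   of length n (coefficients of its representative of degree < n). *)
Notation Rn n := 'rV['F_2]_n.

Section GB.
Variable n : nat.

Definition poly_of (u : Rn n) : {poly 'F_2} := \sum_(i < n) u 0 i *: 'X^i.
Definition rv_of (p : {poly 'F_2}) : Rn n :=
  \row_(i < n) (p %% ('X^n - 1))`_i.

Definition rmul (u v : Rn n) : Rn n := rv_of (poly_of u * poly_of v).
(* u(x^{-1}) with x^{-1} = x^{n-1} *)
Definition rinv (u : Rn n) : Rn n := rv_of (poly_of u \Po 'X^(n.-1)).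

Definition wt (u : Rn n) : nat := #|[set i : 'I_n | u 0 i != 0]|.
Definition wt2 (w : Rn n * Rn n) : nat := (wt w.1 + wt w.2)%N.

Definition C2 (a b : Rn n) : {set Rn n * Rn n} :=
  [set (rmul c a, rmul c b) | c : Rn n].
Definition C1 (a b : Rn n) : {set Rn n * Rn n} :=
  [set w | rmul w.1 b + rmul w.2 a == 0].
Definition C2' (a b : Rn n) : {set Rn n * Rn n} :=
  [set (rmul c (rinv b), rmul c (rinv a)) | c : Rn n].
Definition C1' (a b : Rn n) : {set Rn n * Rn n} :=
  [set w | rmul w.1 (rinv a) + rmul w.2 (rinv b) == 0].

Definition dimF2 (C : {set Rn n * Rn n}) : nat := \dim (span (enum C)).

Definition GB_dim (a b : Rn n) : nat := (dimF2 (C1 a b) - dimF2 (C2 a b))%N.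

(* minimum weight of a finite set of vectors; the default (2n+1) exceeds
   every possible weight and is only reached on the empty set *)
Definition min_wt (S : {set Rn n * Rn n}) : nat :=
  \big[minn/(2 * n).+1]_(w in S) wt2 w.

Definition GB_distance (a b : Rn n) : nat :=
  minn (min_wt (C1 a b :\: C2 a b)) (min_wt (C1' a b :\: C2' a b)).

End GB.

(* Main.v *)
Require Import Defs.
From HB Require Import structures.
From mathcomp Require Import all_boot all_order all_algebra.
Local Open Scope ring_scope.
Import GRing.Theory.

Section H.
Variable k : nat.
Local Notation n := k.+1.
Local Notation d := ('X^n - 1 : {poly 'F_2}).

Lemma size_d : size d = n.+1.
Proof. by rewrite size_Xn_sub_1. Qed.

Lemma coef_poly_of (u : Rn n) (j : nat) :
  (poly_of u)`_j = if (j < n)%N then u 0 (inord j) else 0.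
Proof.
rewrite /poly_of coef_sum.
under eq_bigr => i _ do rewrite coefZ coefXn.
case: ifP => hj.
  rewrite (bigD1 (inord j)) //= inordK // eqxx mulr1 big1 ?addr0 // => i hi.
  case: eqP => [ej|]; last by rewrite mulr0.
  by case/eqP: hi; apply: val_inj; rewrite /= inordK // -ej.
rewrite big1 // => i _; case: eqP => [ej|]; last by rewrite mulr0.
by move: (ltn_ord i); rewrite -ej hj.
Qed.

Lemma size_poly_of (u : Rn n) : (size (poly_of u) <= n)%N.
Proof.
apply/leq_sizeP => j hj; rewrite coef_poly_of.
by case: ifP => // h; move: (leq_trans h hj); rewrite ltnn.
Qed.

Lemma rv_of_poly_of (u : Rn n) : rv_of n (poly_of u) = u.
Proof.
apply/rowP => i; rewrite mxE modp_small ?size_d ?ltnS ?size_poly_of //.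
rewrite coef_poly_of ltn_ord; congr (u 0 _); apply: val_inj; by rewrite /= inordK.
Qed.

Lemma poly_of_rv_of p : poly_of (rv_of n p) = p %% d.
Proof.
apply/polyP => j; rewrite coef_poly_of; case: ifP => hj.
  by rewrite mxE inordK.
apply/eqP; rewrite eq_sym; apply/eqP; apply: nth_default.
have := ltn_modp p d; rewrite size_d -size_poly_eq0 size_d /= => h.
by move: h; rewrite ltnS => h; apply: leq_trans h _; rewrite leqNgt hj.
Qed.

Lemma rv_of_mod p : rv_of n (p %% d) = rv_of n p.
Proof. by apply/rowP => i; rewrite !mxE modp_id. Qed.

Lemma rv_ofD p q : rv_of n (p + q) = rv_of n p + rv_of n q.
Proof. by apply/rowP => i; rewrite !mxE modpD coefD. Qed.

Lemma poly_ofD (u v : Rn n) : poly_of (u + v) = poly_of u + poly_of v.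
Proof.
by rewrite /poly_of -big_split; apply: eq_bigr => i _; rewrite mxE scalerDl.
Qed.

Lemma rmulA (u v w : Rn n) : rmul (rmul u v) w = rmul u (rmul v w).
Proof.
rewrite /rmul !poly_of_rv_of -rv_of_mod mulrC modp_mul -[RHS]rv_of_mod modp_mul.
by rewrite mulrC -mulrA.
Qed.

Lemma rmulC (u v : Rn n) : rmul u v = rmul v u.
Proof. by rewrite /rmul mulrC. Qed.

Definition one : Rn n := rv_of n 1.

Lemma poly_of_one : poly_of one = 1.
Proof. by rewrite poly_of_rv_of modp_small // size_d size_poly1. Qed.

Lemma rmul1 (u : Rn n) : rmul one u = u.
Proof. by rewrite /rmul poly_of_one mul1r rv_of_poly_of. Qed.

Lemma rmulDl (u v w : Rn n) : rmul (u + v) w = rmul u w + rmul v w.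
Proof. by rewrite /rmul poly_ofD mulrDl rv_ofD. Qed.

Lemma addxx (x : Rn n) : x + x = 0.
Proof.
apply/rowP => i; rewrite !mxE.
by rewrite -mulr2n -mulr_natr (pcharf0 (pchar_Fp (p:=2) isT)) mulr0.
Qed.

Lemma sum0_eq (x y : Rn n) : x + y = 0 -> x = y.
Proof.
by move=> h; rewrite -[x]addr0 -(addxx y) addrA h add0r.
Qed.

Lemma wt_one : wt one = 1%N.
Proof.
rewrite /wt (_ : [set i | _] = [set (ord0 : 'I_n)]) ?cards1 //; apply/setP => i.
rewrite !inE mxE modp_small ?size_d ?size_poly1 // coefC.
have -> : (nat_of_ord i == 0%N) = (i == ord0) by [].
by case: (i == ord0).
Qed.

End H.

Lemma bigmin_le (T : finType) (S : {set T}) (F : T -> nat) x0 j :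
  j \in S -> (\big[minn/x0]_(i in S) F i <= F j)%N.
Proof.
move=> hj.
have : j \in index_enum T by rewrite mem_index_enum.
elim: (index_enum T) => //= i r IH; rewrite in_cons big_cons => /orP [/eqP <-|/IH h].
  by rewrite hj geq_minl.
by case: ifP => _ //; apply: leq_trans (geq_minr _ _) h.
Qed.

Theorem lemma1 (n : nat) (a b m : Rn n) :
  b = rmul m a ->
  (0 < GB_dim a b)%N ->
  (GB_distance a b <= wt m + 1)%N.
Proof.
case: n a b m => [|k] a b m hb hdim.
  suff: C1 a b = C2 a b by move=> e; move: hdim; rewrite /GB_dim e subnn.
  apply/setP => w; rewrite !inE; symmetry.
  have -> : w = (rmul 0 a, rmul 0 b) by case: w => u v; rewrite !(thinmx0 u) !(thinmx0 v) !(thinmx0 (rmul _ _)).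
  by rewrite /= (thinmx0 (_ + _)) eqxx; apply/imsetP; exists 0.
have h1 : (one k, m) \in C1 a b.
  by rewrite inE /= rmul1 hb addxx.
have h2 : (one k, m) \notin C2 a b.
  apply/negP => /imsetP [c _ [ec em]].
  suff: C1 a b = C2 a b by move=> e; move: hdim; rewrite /GB_dim e subnn.
  apply/setP => -[u v]; apply/idP/idP.
    rewrite inE /= => /eqP huv; apply/imsetP; exists (rmul u c) => //.
    rewrite !rmulA -ec -em [rmul u (one k)]rmulC rmul1; congr pair.
    have e1 : rmul (rmul u m) a = rmul v a.
      by apply: sum0_eq; rewrite rmulA -hb.
    have := congr1 (fun x => rmul x c) e1.
    by rewrite /= !rmulA [rmul a c]rmulC -ec ![rmul _ (one k)]rmulC !rmul1.
  case/imsetP => c' _ [-> ->]; rewrite inE /=.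
  by rewrite !rmulA [rmul b a]rmulC addxx.
have hin : (one k, m) \in C1 a b :\: C2 a b by rewrite inE h1 h2.
rewrite /GB_distance; apply: leq_trans (geq_minl _ _) _.
rewrite /min_wt; apply: leq_trans (bigmin_le _ _ _ _ _ hin) _.
by rewrite /wt2 /= wt_one addnC.
Qed.
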